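(* Let $N=3$ and suppose $$\kappa>\frac{\sqrt{138+22\sqrt{33}}}{4}\,D(\Omega)\ (\approx4.0649\,D(\Omega)).$$ Then for every initial datum $\Theta^0\in\mathbb{R}^3$, the solution of the three-oscillator Kuramoto model $\dot\theta_i=\nu_i+\frac\kappa3\sum_{j=1}^3\sin(\theta_j-\theta_i)$, $i=1,2,3$, exhibits complete phase-locking.
   Context: $D(\Omega)=\max_{i,j}|\nu_i-\nu_j|$ for $\Omega=(\nu_1,\nu_2,\nu_3)$. Complete phase-locking: $\lim_{t\to\infty}(\theta_i(t)-\theta_j(t))$ exists for all $i,j$. *)

(* Defs.v *)
From Stdlib Require Import Reals.
From Coquelicot Require Import Coquelicot.
Open Scope R_scope.

(* Oscillators are indexed by 0, 1, 2 (i.e. i < 3). *)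

Definition D3 (nu : nat -> R) : R :=
  Rmax (Rmax (Rabs (nu 0%nat - nu 1%nat)) (Rabs (nu 0%nat - nu 2%nat)))
       (Rabs (nu 1%nat - nu 2%nat)).

Definition kuramoto3_rhs (kappa : R) (nu : nat -> R) (x : nat -> R) (i : nat) : R :=
  nu i + kappa / 3 * (sin (x 0%nat - x i) + sin (x 1%nat - x i) + sin (x 2%nat - x i)).

Definition kuramoto3_solution (kappa : R) (nu : nat -> R) (Theta0 : nat -> R)
  (theta : nat -> R -> R) : Prop :=
  (forall i, (i < 3)%nat -> theta i 0 = Theta0 i) /\
  (forall i, (i < 3)%nat -> filterlim (theta i) (at_right 0) (locally (theta i 0))) /\
  (forall i t, (i < 3)%nat -> 0 < t ->
     is_derive (theta i) t (kuramoto3_rhs kappa nu (fun j => theta j t) i)).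

Definition complete_phase_locking (theta : nat -> R -> R) : Prop :=
  forall i j, (i < 3)%nat -> (j < 3)%nat ->
    ex_finite_lim (fun t => theta i t - theta j t) p_infty.

(* Main.v *)
Require Import Defs.
From Stdlib Require Import Reals Lra Lia Classical.
From Coquelicot Require Import Coquelicot.
Open Scope R_scope.

Lemma deriv_neg_left f x l : is_derive f x l -> l < 0 ->
  exists d, 0 < d /\ forall u, x - d < u < x -> f x < f u.
Proof.
  intros H Hl. apply is_derive_Reals in H.
  destruct (H (-l/2)) as [d Hd]; [lra|].
  exists d. split; [apply cond_pos|]. intros u Hu.
  assert (H0 : u - x <> 0) by lra.
  assert (H1 : Rabs (u-x) < d) by (rewrite Rabs_left; lra).
  specialize (Hd (u - x) H0 H1). replace (x + (u - x)) with u in Hd by ring.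
  apply Rabs_def2 in Hd. destruct Hd as [Hd1 Hd2].
  set (q := (f u - f x) / (u - x)) in *.
  assert (f u - f x = q * (u - x)) by (unfold q; field; lra).
  nra.
Qed.

Lemma derive_cont f x l : is_derive f x l -> continuity_pt f x.
Proof.
  intros H. apply continuity_pt_filterlim. apply (ex_derive_continuous f x).
  exists l; exact H.
Qed.

Lemma cont_eps f x : continuity_pt f x -> forall e, 0 < e ->
  exists d, 0 < d /\ forall y, Rabs (y - x) < d -> Rabs (f y - f x) < e.
Proof.
  intros H e He. destruct (H e He) as [d [Hd H2]]. exists d; split; auto.
  intros y Hy.
  destruct (Req_dec x y) as [->|Hne].
  - rewrite Rminus_diag, Rabs_R0; auto.
  - apply H2. split. split; [exact I| exact Hne]. simpl; unfold R_dist; exact Hy.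
Qed.

Lemma barrier (f df : R -> R) (L : R) :
  (forall t, 0 < t -> is_derive f t (df t)) -> f 1 < L ->
  (forall t, 0 < t -> f t = L -> df t < 0) -> forall t, 1 <= t -> f t < L.
Proof.
  intros Hd H1 Hneg t1 Ht1.
  destruct (Rlt_le_dec (f t1) L) as [|Hge]; auto. exfalso.
  set (E := fun s => 1 <= s /\ forall u, 1 <= u <= s -> f u < L).
  assert (HE1 : E 1) by (split; [lra| intros u Hu; replace u with 1 by lra; auto]).
  assert (Hb : bound E).
  { exists t1. intros s [Hs1 Hs2]. destruct (Rle_dec s t1); auto.
    assert (f t1 < L) by (apply Hs2; lra). lra. }
  destruct (completeness E Hb (ex_intro _ 1 HE1)) as [sg [Hub Hlub]].
  assert (Hsg1 : 1 <= sg) by (apply Hub; auto).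
  assert (F1 : forall u, 1 <= u < sg -> f u < L).
  { intros u Hu. destruct (classic (exists s, E s /\ u < s)) as [[s [[_ Hs] Hus]]|Hn].
    - apply Hs; lra.
    - assert (sg <= u); [|lra]. apply Hlub. intros s Es.
      destruct (Rle_dec s u); auto. exfalso; apply Hn; exists s; split; auto; lra. }
  assert (Hc : continuity_pt f sg) by (apply (derive_cont f sg (df sg)), Hd; lra).
  destruct (Rtotal_order (f sg) L) as [Hlt|[Heq|Hgt]].
  - destruct (cont_eps f sg Hc (L - f sg)) as [d [Hd0 Hd1]]; [lra|].
    assert (E (sg + d/2)).
    { split; [lra|]. intros u Hu. destruct (Rlt_le_dec u sg).
      - apply F1; lra.
      - assert (Rabs (f u - f sg) < L - f sg) by (apply Hd1; rewrite Rabs_right; lra).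
        apply Rabs_def2 in H. lra. }
    assert (sg + d/2 <= sg) by (apply Hub; auto). lra.
  - assert (Hs1 : 1 < sg) by (destruct Hsg1; auto; subst; lra).
    destruct (deriv_neg_left f sg (df sg)) as [d [Hd0 Hd1]].
    { apply Hd; lra. } { apply Hneg; lra. }
    set (u := sg - Rmin d (sg - 1) / 2).
    assert (0 < Rmin d (sg - 1)) by (apply Rmin_pos; lra).
    assert (Rmin d (sg - 1) <= d) by apply Rmin_l.
    assert (Rmin d (sg - 1) <= sg - 1) by apply Rmin_r.
    assert (f sg < f u) by (apply Hd1; unfold u; lra).
    assert (f u < L) by (apply F1; unfold u; lra). lra.
  - assert (Hs1 : 1 < sg) by (destruct Hsg1; auto; subst; lra).
    destruct (cont_eps f sg Hc (f sg - L)) as [d [Hd0 Hd1]]; [lra|].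
    set (u := sg - Rmin d (sg - 1) / 2).
    assert (0 < Rmin d (sg - 1)) by (apply Rmin_pos; lra).
    assert (Rmin d (sg - 1) <= d) by apply Rmin_l.
    assert (Rmin d (sg - 1) <= sg - 1) by apply Rmin_r.
    assert (Hq : Rabs (f u - f sg) < f sg - L) by (apply Hd1; unfold u; rewrite Rabs_left; lra).
    apply Rabs_def2 in Hq.
    assert (f u < L) by (apply F1; unfold u; lra). lra.
Qed.

Lemma mvt_pos f df a b : 0 < a -> a <= b -> (forall t, 0 < t -> is_derive f t (df t)) ->
  exists c, a <= c <= b /\ f b - f a = df c * (b - a).
Proof.
  intros Ha Hab Hd.
  destruct (MVT_gen f a b df) as [c [Hc Heq]].
  - intros x Hx. apply Hd. rewrite Rmin_left in Hx by lra. lra.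
  - intros x Hx. apply (derive_cont f x (df x)), Hd. rewrite Rmin_left in Hx by lra. lra.
  - exists c. rewrite Rmin_left, Rmax_right in Hc by lra. auto.
Qed.


Lemma zero_deriv (f g : R -> R) a b : (forall x, a < x < b -> f x = 0) ->
  (forall x, a < x < b -> is_derive f x (g x)) -> forall x, a < x < b -> g x = 0.
Proof.
  intros Hz Hd x Hx.
  assert (H0 : is_derive (fun _ => 0) x 0) by apply (is_derive_const 0 x).
  assert (Hp : 0 < Rmin (x-a) (b-x)) by (apply Rmin_pos; lra).
  assert (Hl : locally x (fun t => 0 = f t)).
  { exists (mkposreal _ Hp). intros y Hy. symmetry; apply Hz.
    change (Rabs (y - x) < Rmin (x-a) (b-x)) in Hy.
    assert (Rmin (x-a) (b-x) <= x - a) by apply Rmin_l.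
    assert (Rmin (x-a) (b-x) <= b - x) by apply Rmin_r.
    apply Rabs_def2 in Hy. lra. }
  apply (is_derive_ext_loc _ _ _ _ Hl) in H0.
  apply is_derive_unique in H0. rewrite <- (is_derive_unique _ _ _ (Hd x Hx)). exact H0.
Qed.

Lemma poly6_nz a b c0 c1 c2 c3 c4 c5 : a < b ->
  ~ (forall x, a < x < b -> 4*x^6 + c5*x^5 + c4*x^4 + c3*x^3 + c2*x^2 + c1*x + c0 = 0).
Proof.
  intros Hab Hz.
  assert (H1 := zero_deriv _ (fun x => 24*x^5 + 5*c5*x^4 + 4*c4*x^3 + 3*c3*x^2 + 2*c2*x + c1) a b Hz
    ltac:(intros; auto_derive; try exact I; try ring)).
  assert (H2 := zero_deriv _ (fun x => 120*x^4 + 20*c5*x^3 + 12*c4*x^2 + 6*c3*x + 2*c2) a b H1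
    ltac:(intros; auto_derive; try exact I; try ring)).
  assert (H3 := zero_deriv _ (fun x => 480*x^3 + 60*c5*x^2 + 24*c4*x + 6*c3) a b H2
    ltac:(intros; auto_derive; try exact I; try ring)).
  assert (H4 := zero_deriv _ (fun x => 1440*x^2 + 120*c5*x + 24*c4) a b H3
    ltac:(intros; auto_derive; try exact I; try ring)).
  assert (H5 := zero_deriv _ (fun x => 2880*x + 120*c5) a b H4
    ltac:(intros; auto_derive; try exact I; try ring)).
  assert (H6 := zero_deriv _ (fun x => 2880) a b H5
    ltac:(intros; auto_derive; try exact I; try ring)).
  specialize (H6 ((a+b)/2)). simpl in H6. lra.
Qed.

Lemma cos_nonconst a b : a < b -> exists c1 c2, a <= c1 <= b /\ a <= c2 <= b /\ cos c1 <> cos c2.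
Proof.
  intros Hab. apply NNPP. intros Hn.
  assert (Hc : forall c, a < c < b -> cos c - cos a = 0).
  { intros c Hc. apply NNPP; intros Hne. apply Hn. exists c, a. split; [lra|split; [lra|]]. intro; apply Hne; lra. }
  assert (H1 := zero_deriv _ (fun c => - sin c) a b Hc ltac:(intros; auto_derive; try exact I; try ring)).
  assert (H1' : forall c, a < c < b -> sin c = 0) by (intros c Hc'; specialize (H1 c Hc'); simpl in H1; lra).
  assert (H2 := zero_deriv _ (fun c => cos c) a b H1' ltac:(intros; auto_derive; try exact I; try ring)).
  assert (Hm : a < (a+b)/2 < b) by lra.
  pose proof (sin2_cos2 ((a+b)/2)) as E. unfold Rsqr in E.
  rewrite (H1' _ Hm), (H2 _ Hm) in E. lra.
Qed.


Definition Hf p q c := (p * cos c - q)^2 - 2 * sin c * (cos c + 1) * (p - q)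
  + (sin c)^2 * (2 * cos c + 1 + p^2).

Lemma Hf_identity a b : Hf (sin a + sin b) (sin (b - a) - sin a) a = 0.
Proof.
  unfold Hf. rewrite sin_minus.
  pose proof (sin2_cos2 a) as Ea. pose proof (sin2_cos2 b) as Eb. unfold Rsqr in Ea, Eb.
  set (s := sin a) in *. set (x := cos a) in *. set (sb := sin b) in *. set (cb := cos b) in *.
  transitivity ((s*s + 2*s*sb)*(s*s+x*x-1) + s*s*(cb*cb+sb*sb-1)).
  - ring.
  - rewrite Ea. replace (cb*cb+sb*sb) with (sb*sb+cb*cb) by ring. rewrite Eb. ring.
Qed.

Lemma Hf_interval p q g w : 0 < w -> ~ (forall c, g <= c <= g + w -> Hf p q c = 0).
Proof.
  intros Hw Hz.
  destruct (cos_nonconst g (g+w)) as [c1 [c2 [Hc1 [Hc2 Hne]]]]; [lra|].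
  set (lo := Rmin (cos c1) (cos c2)). set (hi := Rmax (cos c1) (cos c2)).
  assert (Hlohi : lo < hi).
  { unfold lo, hi, Rmin, Rmax. destruct (Rle_dec (cos c1) (cos c2)); lra. }
  set (al := 2 - 2*p*q). set (be := 1 + p^2 + q^2). set (ga := 4*(p-q)^2).
  apply (poly6_nz lo hi (be^2 - ga) (2*al*be - 2*ga) (al^2 - 2*be) (-4*be - 2*al + 2*ga)
     (1 - 4*al + ga) 4 Hlohi).
  intros x Hx.
  destruct (IVT_gen cos c1 c2 x continuity_cos) as [c [Hc Hcx]].
  { unfold lo, hi in Hx. lra. }
  assert (Hgc : g <= c <= g + w).
  { unfold Rmin, Rmax in Hc. destruct (Rle_dec c1 c2); lra. }
  specialize (Hz c Hgc). unfold Hf in Hz. rewrite Hcx in Hz.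
  pose proof (sin2_cos2 c) as E. unfold Rsqr in E. rewrite Hcx in E.
  set (s := sin c) in *.
  set (A := (p*x - q)^2 + (1 - x^2)*(2*x+1+p^2)).
  set (B := -2*(x+1)*(p-q)).
  assert (HAB : A = - s * B).
  { unfold A, B. replace (1 - x^2) with (s*s) by lra. lra. }
  assert (HP : A^2 - (1 - x^2) * B^2 = 0).
  { rewrite HAB. replace (1 - x^2) with (s*s) by lra. ring. }
  rewrite <- HP. unfold A, B, al, be, ga. ring.
Qed.


Definition conv (f : R -> R) (l : R) :=
  forall eps, 0 < eps -> exists T, forall t, T <= t -> Rabs (f t - l) < eps.

Lemma Hf_lip p q p' q' c : Rabs (p'-p) <= 1 -> Rabs (q'-q) <= 1 ->
  Rabs (Hf p' q' c - Hf p q c) <= (Rabs (p'-p) + Rabs (q'-q)) * (4*Rabs p + 2*Rabs q + 7).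
Proof.
  intros H1 H2.
  assert (Rabs_R2 : Rabs 2 = 2) by (apply Rabs_right; lra).
  set (e1 := p' - p) in *. set (e2 := q' - q) in *.
  assert (Ex : Rabs (cos c) <= 1) by (apply Rabs_le; apply COS_bound).
  assert (Es : Rabs (sin c) <= 1) by (apply Rabs_le; apply SIN_bound).
  set (x := cos c) in *. set (s := sin c) in *.
  assert (E : Hf p' q' c - Hf p q c =
    (e1*x - e2)*((p + e1)*x - (q + e2) + p*x - q) + (-2*s*(x+1))*(e1 - e2) + (s*s)*e1*(2*p + e1)).
  { unfold Hf, e1, e2. fold x s. ring. }
  rewrite E. clear E.
  assert (Pe1 := Rabs_pos e1). assert (Pe2 := Rabs_pos e2).
  assert (Pp := Rabs_pos p). assert (Pq := Rabs_pos q).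
  assert (Px := Rabs_pos x). assert (Ps := Rabs_pos s).
  assert (A1 : Rabs (e1*x - e2) <= Rabs e1 + Rabs e2).
  { unfold Rminus. eapply Rle_trans; [apply Rabs_triang|]. rewrite Rabs_Ropp, Rabs_mult. nra. }
  assert (A2 : Rabs ((p + e1)*x - (q + e2) + p*x - q) <= 2*Rabs p + 2*Rabs q + 2).
  { replace ((p + e1)*x - (q + e2) + p*x - q) with ((2*p + e1)*x + (-(2*q + e2))) by ring.
    eapply Rle_trans; [apply Rabs_triang|]. rewrite Rabs_Ropp, Rabs_mult.
    assert (Rabs (2*p + e1) <= 2*Rabs p + 1).
    { eapply Rle_trans; [apply Rabs_triang|]. rewrite Rabs_mult, Rabs_R2. lra. }
    assert (Rabs (2*q + e2) <= 2*Rabs q + 1).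
    { eapply Rle_trans; [apply Rabs_triang|]. rewrite Rabs_mult, Rabs_R2. lra. }
    assert (Rabs (2*p+e1) * Rabs x <= 2 * Rabs p + 1).
    { assert (0 <= Rabs (2*p+e1)) by apply Rabs_pos. nra. }
    lra. }
  assert (A3 : Rabs (-2*s*(x+1)) <= 4).
  { rewrite !Rabs_mult. replace (Rabs (-2)) with 2 by (rewrite Rabs_left; lra).
    assert (Rabs (x+1) <= 2) by (eapply Rle_trans; [apply Rabs_triang|]; rewrite Rabs_R1; lra).
    assert (0 <= Rabs (x+1)) by apply Rabs_pos. nra. }
  assert (A4 : Rabs (e1 - e2) <= Rabs e1 + Rabs e2).
  { unfold Rminus. eapply Rle_trans; [apply Rabs_triang|]. rewrite Rabs_Ropp. lra. }
  assert (A5 : Rabs (s*s) <= 1) by (rewrite Rabs_mult; nra).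
  assert (A6 : Rabs (2*p + e1) <= 2*Rabs p + 1).
  { eapply Rle_trans; [apply Rabs_triang|]. rewrite Rabs_mult, Rabs_R2. lra. }
  eapply Rle_trans; [apply Rabs_triang|].
  eapply Rle_trans; [apply Rplus_le_compat_r; apply Rabs_triang|].
  assert (0 <= Rabs (e1*x - e2)) by apply Rabs_pos.
  assert (0 <= Rabs ((p + e1)*x - (q + e2) + p*x - q)) by apply Rabs_pos.
  assert (0 <= Rabs (-2*s*(x+1))) by apply Rabs_pos.
  assert (0 <= Rabs (e1 - e2)) by apply Rabs_pos.
  assert (0 <= Rabs (s*s)) by apply Rabs_pos.
  assert (0 <= Rabs (2*p + e1)) by apply Rabs_pos.
  assert (B1 : Rabs ((e1*x - e2) * ((p + e1)*x - (q + e2) + p*x - q)) <=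
     (Rabs e1 + Rabs e2) * (2*Rabs p + 2*Rabs q + 2)) by (rewrite Rabs_mult; apply Rmult_le_compat; lra).
  assert (B2 : Rabs ((-2*s*(x+1)) * (e1 - e2)) <= 4 * (Rabs e1 + Rabs e2))
    by (rewrite Rabs_mult; apply Rmult_le_compat; lra).
  assert (B3 : Rabs ((s*s) * e1 * (2*p + e1)) <= 1 * Rabs e1 * (2*Rabs p + 1)).
  { rewrite !Rabs_mult. rewrite Rabs_mult in A5. apply Rmult_le_compat; try nra. }
  nra.
Qed.

Lemma cauchy_conv a : (forall eps, 0 < eps -> exists T, forall t1 t2, T <= t1 -> T <= t2 ->
   Rabs (a t1 - a t2) < eps) -> exists l, conv a l.
Proof.
  intros Hc.
  assert (HN : forall T, exists N : nat, T <= INR N).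
  { intros T. destruct (INR_archimed 1 T) as [N HN]; [lra|]. exists N. lra. }
  assert (Hu : ex_lim_seq_cauchy (fun n => a (INR n))).
  { intros eps. destruct (Hc eps (cond_pos eps)) as [T HT]. destruct (HN T) as [N HN'].
    exists N. intros n m Hn Hm. apply HT; eapply Rle_trans; try exact HN'; apply le_INR; auto. }
  apply ex_lim_seq_cauchy_corr in Hu. destruct Hu as [l Hl].
  exists l. intros eps Heps.
  apply is_lim_seq_spec in Hl.
  destruct (Hl (mkposreal (eps/2) ltac:(lra))) as [N1 HN1].
  destruct (Hc (eps/2) ltac:(lra)) as [T HT].
  destruct (HN (Rmax T (INR N1))) as [n Hn].
  exists T. intros t Ht.
  assert (Hn1 : (N1 <= n)%nat).
  { apply INR_le. eapply Rle_trans; [apply Rmax_r| exact Hn]. }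
  specialize (HN1 n Hn1). simpl in HN1.
  assert (Rabs (a t - a (INR n)) < eps/2).
  { apply HT; auto. eapply Rle_trans; [apply Rmax_l| exact Hn]. }
  replace (a t - l) with ((a t - a (INR n)) + (a (INR n) - l)) by ring.
  eapply Rle_lt_trans; [apply Rabs_triang|]. lra.
Qed.

Lemma pigeon (P : nat -> R -> Prop) N :
  (forall k T T', T' <= T -> P k T -> P k T') ->
  (forall T, exists k, (k <= N)%nat /\ P k T) -> exists k, (k <= N)%nat /\ forall T, P k T.
Proof.
  revert P. induction N as [|N IH]; intros P Hmon HP.
  - exists 0%nat. split; auto. intros T. destruct (HP T) as [k [Hk Pk]].
    replace k with 0%nat in Pk by lia. auto.
  - destruct (classic (forall T, P (S N) T)) as [Hall|Hn].
    + exists (S N). auto.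
    + apply not_all_ex_not in Hn. destruct Hn as [T0 HT0].
      destruct (IH (fun k T => P k (Rmax T T0))) as [k [Hk Pk]].
      * intros k T T' HTT' Pk. apply (Hmon k (Rmax T T0)); auto.
        apply Rmax_le_compat; lra.
      * intros T. destruct (HP (Rmax T T0)) as [k [Hk Pk]].
        destruct (Nat.eq_dec k (S N)) as [->|Hne].
        -- exfalso. apply HT0. apply (Hmon _ (Rmax T T0)); auto. apply Rmax_r.
        -- exists k. split; [lia|auto].
      * exists k. split; [lia|]. intros T. apply (Hmon k (Rmax T T0)); auto. apply Rmax_l.
Qed.

Lemma ivt_w f x y c : x <= y -> (forall z, x <= z <= y -> continuity_pt f z) ->
  Rmin (f x) (f y) <= c <= Rmax (f x) (f y) -> exists z, x <= z <= y /\ f z = c.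
Proof.
  intros Hxy Hc Hb.
  destruct (Req_dec (f x) c) as [E|Ex]; [exists x; split; [lra|auto]|].
  destruct (Req_dec (f y) c) as [E|Ey]; [exists y; split; [lra|auto]|].
  destruct (Req_dec x y) as [<-|Hne].
  { unfold Rmin, Rmax in Hb. destruct (Rle_dec (f x) (f x)); lra. }
  assert (Hlt : x < y) by lra.
  unfold Rmin, Rmax in Hb. destruct (Rle_dec (f x) (f y)) as [Hle|Hgt].
  - destruct (Ranalysis5.IVT_interv (fun z => f z - c) x y) as [z [Hz Hfz]]; auto.
    + intros z Hz. apply continuity_pt_minus; [apply Hc; auto| apply continuity_pt_const; intros u v; auto].
    + lra.
    + lra.
    + exists z. split; auto. lra.
  - destruct (Ranalysis5.IVT_interv (fun z => c - f z) x y) as [z [Hz Hfz]]; auto.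
    + intros z Hz. apply continuity_pt_minus; [apply continuity_pt_const; intros u v; auto|apply Hc; auto].
    + lra.
    + lra.
    + exists z. split; auto. lra.
Qed.


Lemma not_cauchy a : ~ (forall eps, 0 < eps -> exists T, forall t1 t2, T <= t1 -> T <= t2 ->
   Rabs (a t1 - a t2) < eps) ->
  exists eps, 0 < eps /\ forall T, exists t1 t2, T <= t1 /\ T <= t2 /\ eps <= Rabs (a t1 - a t2).
Proof.
  intros Hn. apply NNPP. intros Hn2. apply Hn. intros eps Heps.
  apply NNPP. intros Hn3. apply Hn2. exists eps. split; auto. intros T.
  apply NNPP. intros Hn4. apply Hn3. exists T. intros t1 t2 H1 H2.
  apply Rnot_le_lt. intros Hle. apply Hn4. exists t1, t2. auto.
Qed.

Lemma nfloor_mono z z' (Hz : 0 <= z) (Hz' : 0 <= z') : z <= z' ->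
  (proj1_sig (nfloor_ex z Hz) <= proj1_sig (nfloor_ex z' Hz'))%nat.
Proof.
  intros Hle. destruct (nfloor_ex z Hz) as [n Hn]. destruct (nfloor_ex z' Hz') as [n' Hn'].
  simpl. assert (INR n < INR (S n')) by (rewrite S_INR; lra).
  apply INR_lt in H. lia.
Qed.

Lemma CL (a b : R -> R) p q M :
  (forall t, 0 < t -> continuity_pt a t) -> (forall t, 1 <= t -> Rabs (a t) <= M) ->
  conv (fun t => sin (a t) + sin (b t)) p -> conv (fun t => sin (b t - a t) - sin (a t)) q ->
  exists l, conv a l.
Proof.
  intros Hc HM Hp Hq.
  apply cauchy_conv. apply NNPP. intros Hnc. apply not_cauchy in Hnc.
  destruct Hnc as [eps [Heps Hosc]].
  assert (HM0 : 0 <= M) by (specialize (HM 1 (Rle_refl 1)); pose proof (Rabs_pos (a 1)); lra).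
  set (w := eps / 3).
  assert (Hw : 0 < w) by (unfold w; lra).
  assert (H2M : 0 <= 2*M/w) by (apply Rmult_le_pos; [lra| left; apply Rinv_0_lt_compat; lra]).
  set (N := S (proj1_sig (nfloor_ex _ H2M))).
  set (g := fun k : nat => - M + INR k * w).
  set (P := fun (k : nat) (T : R) => exists t1 t2, Rmax T 1 <= t1 /\ Rmax T 1 <= t2 /\
              a t1 <= g k /\ g k + w <= a t2).
  destruct (pigeon P N) as [k0 [Hk0 Hall]].
  - intros k T T' HT [t1 [t2 [H1 [H2 [H3 H4]]]]]. exists t1, t2.
    assert (Rmax T' 1 <= Rmax T 1) by (apply Rmax_le_compat; lra).
    repeat split; auto; lra.
  - intros T. destruct (Hosc (Rmax T 1)) as [t1 [t2 [H1 [H2 H3]]]].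
    assert (Hcase : exists lo hi, Rmax T 1 <= lo /\ Rmax T 1 <= hi /\ a lo + eps <= a hi).
    { destruct (Rle_dec (a t1) (a t2)).
      - exists t1, t2. rewrite Rabs_left1 in H3 by lra. repeat split; auto; lra.
      - exists t2, t1. rewrite Rabs_right in H3 by lra. repeat split; auto; lra. }
    destruct Hcase as [lo [hi [Hlo [Hhi Hlh]]]].
    assert (Hlo1 : 1 <= lo) by (eapply Rle_trans; [apply Rmax_r| exact Hlo]).
    assert (Hz : 0 <= (a lo + M)/w).
    { specialize (HM lo Hlo1). apply Rabs_le_between in HM.
      apply Rmult_le_pos; [lra| left; apply Rinv_0_lt_compat; lra]. }
    exists (S (proj1_sig (nfloor_ex _ Hz))).
    pose proof (proj2_sig (nfloor_ex _ Hz)) as Hn. simpl in Hn.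
    set (n := proj1_sig (nfloor_ex _ Hz)) in *.
    split.
    + unfold N. apply le_n_S. apply nfloor_mono.
      specialize (HM lo Hlo1). apply Rabs_le_between in HM.
      unfold Rdiv. apply Rmult_le_compat_r; [left; apply Rinv_0_lt_compat; lra| lra].
    + assert (Hzw : (a lo + M)/w * w = a lo + M) by (field; lra).
      exists lo, hi. unfold g. rewrite S_INR. repeat split; auto.
      * assert (INR n * w > ((a lo + M)/w - 1) * w) by (apply Rmult_lt_compat_r; lra). nra.
      * assert (INR n * w <= (a lo + M)/w * w) by (apply Rmult_le_compat_r; lra).
        unfold w in *. nra.
  -
    apply (Hf_interval p q (g k0) w Hw).
    intros c Hcb.
    assert (Hreach : forall T, exists t, Rmax T 1 <= t /\ a t = c).
    { intros T. destruct (Hall T) as [t1 [t2 [H1 [H2 [H3 H4]]]]].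
      destruct (Rle_dec t1 t2).
      - destruct (ivt_w a t1 t2 c) as [z [Hz Hfz]]; auto.
        + intros z Hz. apply Hc. assert (1 <= t1) by (eapply Rle_trans; [apply Rmax_r| exact H1]). lra.
        + unfold Rmin, Rmax. destruct (Rle_dec (a t1) (a t2)); lra.
        + exists z. split; auto. lra.
      - destruct (ivt_w a t2 t1 c) as [z [Hz Hfz]]; [lra| | |].
        + intros z Hz. apply Hc. assert (1 <= t2) by (eapply Rle_trans; [apply Rmax_r| exact H2]). lra.
        + unfold Rmin, Rmax. destruct (Rle_dec (a t2) (a t1)); lra.
        + exists z. split; auto. lra. }
    set (K := 4 * Rabs p + 2 * Rabs q + 7).
    assert (HK : 0 < K) by (unfold K; pose proof (Rabs_pos p); pose proof (Rabs_pos q); lra).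
    apply Rabs_eq_0. apply Rle_antisym; [|apply Rabs_pos].
    apply le_epsilon. intros eta Heta. rewrite Rplus_0_l.
    set (del := Rmin 1 (eta / (2*K))).
    assert (Hdel : 0 < del) by (apply Rmin_pos; [lra| apply Rdiv_lt_0_compat; lra]).
    assert (Hdel1 : del <= 1) by apply Rmin_l.
    assert (Hdel2 : del <= eta / (2*K)) by apply Rmin_r.
    destruct (Hp del Hdel) as [T1 HT1]. destruct (Hq del Hdel) as [T2 HT2].
    destruct (Hreach (Rmax T1 T2)) as [t [Ht Hat]].
    assert (Ht1 : T1 <= t) by (eapply Rle_trans; [|exact Ht]; eapply Rle_trans; [apply Rmax_l|apply Rmax_l]).
    assert (Ht2 : T2 <= t) by (eapply Rle_trans; [|exact Ht]; eapply Rle_trans; [apply Rmax_r|apply Rmax_l]).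
    specialize (HT1 t Ht1). specialize (HT2 t Ht2). simpl in HT1, HT2.
    pose proof (Hf_identity (a t) (b t)) as Hid. rewrite Hat in Hid.
    pose proof (Hf_lip p q (sin c + sin (b t)) (sin (b t - c) - sin c) c) as Hl.
    rewrite Hat in HT1, HT2.
    rewrite Hid in Hl. rewrite Rminus_0_l, Rabs_Ropp in Hl.
    fold K in Hl.
    assert (Rabs (Hf p q c) <= (del + del) * K).
    { eapply Rle_trans; [apply Hl; lra|]. apply Rmult_le_compat_r; lra. }
    assert ((del + del) * K <= eta).
    { assert (del * (2*K) <= eta / (2*K) * (2*K)) by (apply Rmult_le_compat_r; lra).
      replace (eta / (2*K) * (2*K)) with eta in H0 by (field; lra). lra. }
    lra.
Qed.


Lemma numeric : exists y, 0 <= y /\ 0 < sin y /\ 0 < sin y * (2 * cos y - 1) /\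
  forall D kappa, 0 <= D -> sqrt (138 + 22 * sqrt 33) / 4 * D < kappa ->
    D < 2/3 * kappa * (sin y * (2 * cos y - 1)).
Proof.
  set (r := sqrt 33).
  assert (Hr2 : r * r = 33) by (apply sqrt_sqrt; lra).
  assert (Hr0 : 0 <= r) by apply sqrt_pos.
  assert (Hrb : 5.7 < r < 5.8) by nra.
  set (cs := (1 + r) / 8).
  assert (Hcs : -1 <= cs <= 1) by (unfold cs; lra).
  exists (acos cs).
  rewrite cos_acos, sin_acos by exact Hcs.
  set (sn := sqrt (1 - cs²)).
  assert (Hsn2 : sn * sn = 1 - cs * cs).
  { unfold sn. rewrite sqrt_sqrt; unfold Rsqr; [ring|]. unfold cs; nra. }
  assert (Hsn : 0 < sn) by (apply sqrt_lt_R0; unfold Rsqr, cs; nra).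
  assert (Hm : 0 < sn * (2 * cs - 1)) by (apply Rmult_lt_0_compat; unfold cs; lra).
  set (c0 := sqrt (138 + 22 * r) / 4).
  assert (Hc02 : c0 * c0 = (138 + 22 * r) / 16).
  { unfold c0. replace (sqrt (138 + 22 * r) / 4 * (sqrt (138 + 22 * r) / 4))
      with (sqrt (138 + 22 * r) * sqrt (138 + 22 * r) / 16) by field.
    rewrite sqrt_sqrt; lra. }
  assert (Hc0 : 0 <= c0) by (unfold c0; pose proof (sqrt_pos (138 + 22*r)); lra).
  set (m := sn * (2 * cs - 1)) in *.
  assert (Hsq : (c0 * (2*m)) * (c0 * (2*m)) = 9).
  { replace ((c0 * (2*m)) * (c0 * (2*m))) with (c0*c0 * 4 * (sn*sn) * (2*cs-1)^2) by (unfold m; ring).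
    rewrite Hc02, Hsn2. unfold cs.
    transitivity (9 + (r*r - 33) * (-627 + 639*r - 25*r^2 - 11*r^3)/2048); [field|].
    rewrite Hr2. field. }
  assert (Hxp : 0 <= c0 * (2*m)) by (apply Rmult_le_pos; lra).
  assert (Hx : c0 * (2*m) = 3).
  { set (x := c0 * (2*m)) in *. assert ((x - 3) * (x + 3) = 0) by nra.
    apply Rmult_integral in H. lra. }
  repeat split.
  - apply acos_bound.
  - exact Hsn.
  - exact Hm.
  - intros D kappa HD Hk. fold r in Hk. fold c0 in Hk.
    assert (D = c0 * (2*m) / 3 * D) by (rewrite Hx; field).
    nra.
Qed.


Lemma keytrig xi xj xk h : xi - xj = 2*h -> 0 <= sin h ->
  (sin (xj - xi) + sin (xk - xi)) - (sin (xi - xj) + sin (xk - xj)) <= -2 * sin h * (2*cos h - 1).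
Proof.
  intros Hd Hs.
  replace (xj - xi) with (- (2*h)) by lra. rewrite sin_neg. rewrite Hd. rewrite sin_2a.
  set (w := xk - xj - h).
  replace (xk - xi) with (w - h) by (unfold w; lra).
  replace (xk - xj) with (w + h) by (unfold w; lra).
  rewrite sin_minus, sin_plus.
  pose proof (COS_bound w) as Hc.
  assert (0 <= sin h * (1 + cos w)) by (apply Rmult_le_pos; lra).
  nra.
Qed.

Lemma level_neg nui nuj kappa xi xj xk h : 0 < kappa -> xi - xj = 2*h -> 0 <= sin h ->
  nui - nuj < 2/3*kappa*(sin h*(2*cos h-1)) ->
  nui + kappa/3*(sin(xj-xi) + sin(xk-xi)) - (nuj + kappa/3*(sin(xi-xj)+sin(xk-xj))) < 0.
Proof.
  intros Hk Hd Hs Hn. pose proof (keytrig xi xj xk h Hd Hs). nra.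
Qed.

Definition om kappa nu (theta : nat -> R -> R) i t := kuramoto3_rhs kappa nu (fun j => theta j t) i.

Lemma sinz x : sin (x - x) = 0.
Proof. rewrite Rminus_diag. apply sin_0. Qed.

Lemma bounded_diffs kappa nu theta y : 0 < kappa -> 0 <= y -> 0 < sin y ->
  (forall i j, (i < 3)%nat -> (j < 3)%nat -> nu i - nu j < 2/3*kappa*(sin y*(2*cos y-1))) ->
  (forall i t, (i < 3)%nat -> 0 < t -> is_derive (theta i) t (om kappa nu theta i t)) ->
  exists L, 0 < L /\ forall i j t, (i < 3)%nat -> (j < 3)%nat -> 1 <= t -> theta i t - theta j t < L.
Proof.
  intros Hk Hy Hsy HD Hder.
  set (B1 := Rabs (theta 1%nat 1 - theta 0%nat 1) + Rabs (theta 2%nat 1 - theta 0%nat 1)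
            + Rabs (theta 2%nat 1 - theta 1%nat 1)).
  destruct (INR_archimed (4*PI) B1) as [n Hn]; [pose proof PI_RGT_0; lra|].
  set (h := y + 2 * INR n * PI).
  assert (Hch : cos h = cos y) by apply cos_period.
  assert (Hsh : sin h = sin y) by apply sin_period.
  assert (HL : B1 < 2*h).
  { unfold h. pose proof (pos_INR n). pose proof PI_RGT_0. nra. }
  assert (HB1 : 0 <= B1) by (unfold B1; pose proof (Rabs_pos (theta 1%nat 1 - theta 0%nat 1));
    pose proof (Rabs_pos (theta 2%nat 1 - theta 0%nat 1)); pose proof (Rabs_pos (theta 2%nat 1 - theta 1%nat 1)); lra).
  exists (2*h). split; [lra|]. unfold B1 in HL.
  assert (Hp1 := Rle_abs (theta 1%nat 1 - theta 0%nat 1)).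
  assert (Hp2 := Rle_abs (theta 2%nat 1 - theta 0%nat 1)).
  assert (Hp3 := Rle_abs (theta 2%nat 1 - theta 1%nat 1)).
  assert (Hq1 := Rle_abs (-(theta 1%nat 1 - theta 0%nat 1))). rewrite Rabs_Ropp in Hq1.
  assert (Hq2 := Rle_abs (-(theta 2%nat 1 - theta 0%nat 1))). rewrite Rabs_Ropp in Hq2.
  assert (Hq3 := Rle_abs (-(theta 2%nat 1 - theta 1%nat 1))). rewrite Rabs_Ropp in Hq3.
  pose proof (Rabs_pos (theta 1%nat 1 - theta 0%nat 1)).
  pose proof (Rabs_pos (theta 2%nat 1 - theta 0%nat 1)).
  pose proof (Rabs_pos (theta 2%nat 1 - theta 1%nat 1)).
  intros i j t Hi Hj Ht.
  assert (Hgen : forall i j k, (i < 3)%nat -> (j < 3)%nat ->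
     theta i 1 - theta j 1 < 2*h ->
     (forall t, 0 < t -> om kappa nu theta i t - om kappa nu theta j t =
        nu i + kappa/3*(sin(theta j t - theta i t) + sin(theta k t - theta i t))
        - (nu j + kappa/3*(sin(theta i t - theta j t) + sin(theta k t - theta j t)))) ->
     theta i t - theta j t < 2*h).
  { intros i' j' k Hi' Hj' Hone Heq.
    apply (barrier (fun t => theta i' t - theta j' t)
                   (fun t => om kappa nu theta i' t - om kappa nu theta j' t)); auto.
    - intros s Hs. apply (is_derive_minus (theta i') (theta j')); apply Hder; auto.
    - intros s Hs Hlev. rewrite (Heq s Hs).
      apply (level_neg _ _ _ _ _ _ h); auto; try lra. rewrite Hsh, Hch. apply HD; auto. }
  destruct i as [|[|[|i]]]; destruct j as [|[|[|j]]]; try lia; try lra;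
  [ apply (Hgen 0%nat 1%nat 2%nat) | apply (Hgen 0%nat 2%nat 1%nat)
  | apply (Hgen 1%nat 0%nat 2%nat) | apply (Hgen 1%nat 2%nat 0%nat)
  | apply (Hgen 2%nat 0%nat 1%nat) | apply (Hgen 2%nat 1%nat 0%nat) ];
  try lia; try lra.
  all: intros s Hs; unfold om, kuramoto3_rhs; rewrite !sinz; ring.
Qed.


Lemma sin_lip x y : Rabs (sin x - sin y) <= Rabs (x - y).
Proof.
  destruct (MVT_gen sin y x cos) as [c [_ Hc]].
  - intros; auto_derive; try exact I; try ring.
  - intros; apply continuity_sin.
  - rewrite Hc, Rabs_mult. pose proof (COS_bound c).
    assert (Rabs (cos c) <= 1) by (apply Rabs_le; lra).
    pose proof (Rabs_pos (x - y)). nra.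
Qed.

Section Main.
Variables (kappa : R) (nu : nat -> R) (theta : nat -> R -> R).
Hypothesis Hk : 0 < kappa.
Hypothesis Hder : forall i t, (i < 3)%nat -> 0 < t -> is_derive (theta i) t (om kappa nu theta i t).

Let C := Rabs (nu 0%nat) + Rabs (nu 1%nat) + Rabs (nu 2%nat) + kappa.

Lemma om_bound i t : (i < 3)%nat -> Rabs (om kappa nu theta i t) <= C.
Proof.
  intros Hi. unfold om, kuramoto3_rhs, C.
  assert (Hn : Rabs (nu i) <= Rabs (nu 0%nat) + Rabs (nu 1%nat) + Rabs (nu 2%nat)).
  { pose proof (Rabs_pos (nu 0%nat)). pose proof (Rabs_pos (nu 1%nat)). pose proof (Rabs_pos (nu 2%nat)).
    destruct i as [|[|[|i]]]; try lia; lra. }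
  set (S := sin (theta 0%nat t - theta i t) + sin (theta 1%nat t - theta i t) + sin (theta 2%nat t - theta i t)).
  assert (HS : Rabs S <= 3).
  { unfold S. pose proof (SIN_bound (theta 0%nat t - theta i t)).
    pose proof (SIN_bound (theta 1%nat t - theta i t)). pose proof (SIN_bound (theta 2%nat t - theta i t)).
    apply Rabs_le; lra. }
  eapply Rle_trans; [apply Rabs_triang|]. rewrite Rabs_mult.
  rewrite (Rabs_right (kappa/3)) by lra. nra.
Qed.

Lemma th_lip i s t : (i < 3)%nat -> 0 < s -> 0 < t ->
  Rabs (theta i t - theta i s) <= C * Rabs (t - s).
Proof.
  intros Hi Hs Ht.
  destruct (MVT_gen (theta i) s t (om kappa nu theta i)) as [c [Hc Heq]].
  - intros x Hx. apply Hder; auto. assert (0 < Rmin s t) by (apply Rmin_pos; lra). lra.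
  - intros x Hx. apply (derive_cont _ x (om kappa nu theta i x)), Hder; auto.
    assert (0 < Rmin s t) by (apply Rmin_pos; lra). lra.
  - rewrite Heq, Rabs_mult. apply Rmult_le_compat_r; [apply Rabs_pos|]. apply om_bound; auto.
Qed.

Lemma om_lip i s t : (i < 3)%nat -> 0 < s -> 0 < t ->
  Rabs (om kappa nu theta i t - om kappa nu theta i s) <= 2 * kappa * C * Rabs (t - s).
Proof.
  intros Hi Hs Ht.
  assert (Hl : forall l, (l < 3)%nat ->
    Rabs (sin (theta l t - theta i t) - sin (theta l s - theta i s)) <= 2 * C * Rabs (t - s)).
  { intros l Hl. eapply Rle_trans; [apply sin_lip|].
    replace (theta l t - theta i t - (theta l s - theta i s))
      with ((theta l t - theta l s) + - (theta i t - theta i s)) by ring.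
    eapply Rle_trans; [apply Rabs_triang|]. rewrite Rabs_Ropp.
    pose proof (th_lip l s t Hl Hs Ht). pose proof (th_lip i s t Hi Hs Ht). lra. }
  unfold om, kuramoto3_rhs.
  replace (nu i + kappa / 3 * (sin (theta 0%nat t - theta i t) + sin (theta 1%nat t - theta i t) + sin (theta 2%nat t - theta i t)) -
     (nu i + kappa / 3 * (sin (theta 0%nat s - theta i s) + sin (theta 1%nat s - theta i s) + sin (theta 2%nat s - theta i s))))
    with (kappa / 3 * ((sin (theta 0%nat t - theta i t) - sin (theta 0%nat s - theta i s))
       + (sin (theta 1%nat t - theta i t) - sin (theta 1%nat s - theta i s))
       + (sin (theta 2%nat t - theta i t) - sin (theta 2%nat s - theta i s)))) by ring.
  rewrite Rabs_mult, (Rabs_right (kappa/3)) by lra.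
  pose proof (Hl 0%nat ltac:(lia)). pose proof (Hl 1%nat ltac:(lia)). pose proof (Hl 2%nat ltac:(lia)).
  assert (Htri : forall a b c : R, Rabs (a + b + c) <= Rabs a + Rabs b + Rabs c).
  { intros a b c. eapply Rle_trans; [apply Rabs_triang|]. pose proof (Rabs_triang a b). lra. }
  eapply Rle_trans. { apply Rmult_le_compat_l; [lra|]. apply Htri. }
  nra.
Qed.

Let nb := (nu 0%nat + nu 1%nat + nu 2%nat) / 3.
Let th0 t := theta 0%nat t.
Let th1 t := theta 1%nat t.
Let th2 t := theta 2%nat t.

Definition V t := - (nu 1%nat - nb) * (theta 1%nat t - theta 0%nat t) - (nu 2%nat - nb) * (theta 2%nat t - theta 0%nat t)
  - kappa / 3 * (cos (theta 1%nat t - theta 0%nat t) + cos (theta 2%nat t - theta 0%nat t) + cos (theta 2%nat t - theta 1%nat t)).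

Definition dV t := - ((om kappa nu theta 0 t - nb)^2 + (om kappa nu theta 1 t - nb)^2 + (om kappa nu theta 2 t - nb)^2).

Lemma V_deriv t : 0 < t -> is_derive V t (dV t).
Proof.
  intros Ht. unfold V.
  pose proof (Hder 0%nat t ltac:(lia) Ht) as D0.
  pose proof (Hder 1%nat t ltac:(lia) Ht) as D1.
  pose proof (Hder 2%nat t ltac:(lia) Ht) as D2.
  auto_derive.
  - repeat split; eexists; eauto.
  - replace (Derive (fun x => theta 0%nat x) t) with (om kappa nu theta 0 t) by (symmetry; apply is_derive_unique; exact D0).
    replace (Derive (fun x => theta 1%nat x) t) with (om kappa nu theta 1 t) by (symmetry; apply is_derive_unique; exact D1).
    replace (Derive (fun x => theta 2%nat x) t) with (om kappa nu theta 2 t) by (symmetry; apply is_derive_unique; exact D2).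
    replace (theta 1%nat t + - theta 0%nat t) with (theta 1%nat t - theta 0%nat t) by ring.
    replace (theta 2%nat t + - theta 0%nat t) with (theta 2%nat t - theta 0%nat t) by ring.
    replace (theta 2%nat t + - theta 1%nat t) with (theta 2%nat t - theta 1%nat t) by ring.
    unfold dV, om, kuramoto3_rhs, nb. rewrite !sinz.
    replace (theta 0%nat t - theta 1%nat t) with (- (theta 1%nat t - theta 0%nat t)) by ring.
    replace (theta 0%nat t - theta 2%nat t) with (- (theta 2%nat t - theta 0%nat t)) by ring.
    replace (theta 1%nat t - theta 2%nat t) with (- (theta 2%nat t - theta 1%nat t)) by ring.
    rewrite !sin_neg. field.
Qed.

Lemma V_mono s t : 0 < s -> s <= t -> V t <= V s.
Proof.
  intros Hs Hst. destruct (mvt_pos V dV s t Hs Hst V_deriv) as [c [Hc Heq]].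
  assert (dV c <= 0).
  { unfold dV. pose proof (pow2_ge_0 (om kappa nu theta 0 c - nb)).
    pose proof (pow2_ge_0 (om kappa nu theta 1 c - nb)). pose proof (pow2_ge_0 (om kappa nu theta 2 c - nb)). lra. }
  nra.
Qed.

Variable L : R.
Hypothesis HL : forall i j t, (i < 3)%nat -> (j < 3)%nat -> 1 <= t -> theta i t - theta j t < L.

Lemma V_lower t : 1 <= t -> - (Rabs (nu 1%nat - nb) * L + Rabs (nu 2%nat - nb) * L + kappa) <= V t.
Proof.
  intros Ht. unfold V.
  assert (A1 : Rabs (theta 1%nat t - theta 0%nat t) <= L).
  { pose proof (HL 1%nat 0%nat t ltac:(lia) ltac:(lia) Ht). pose proof (HL 0%nat 1%nat t ltac:(lia) ltac:(lia) Ht).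
    apply Rabs_le; lra. }
  assert (A2 : Rabs (theta 2%nat t - theta 0%nat t) <= L).
  { pose proof (HL 2%nat 0%nat t ltac:(lia) ltac:(lia) Ht). pose proof (HL 0%nat 2%nat t ltac:(lia) ltac:(lia) Ht).
    apply Rabs_le; lra. }
  assert (B1 : (nu 1%nat - nb) * (theta 1%nat t - theta 0%nat t) <= Rabs (nu 1%nat - nb) * L).
  { eapply Rle_trans; [apply Rle_abs|]. rewrite Rabs_mult. apply Rmult_le_compat_l; auto. apply Rabs_pos. }
  assert (B2 : (nu 2%nat - nb) * (theta 2%nat t - theta 0%nat t) <= Rabs (nu 2%nat - nb) * L).
  { eapply Rle_trans; [apply Rle_abs|]. rewrite Rabs_mult. apply Rmult_le_compat_l; auto. apply Rabs_pos. }
  pose proof (COS_bound (theta 1%nat t - theta 0%nat t)).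
  pose proof (COS_bound (theta 2%nat t - theta 0%nat t)).
  pose proof (COS_bound (theta 2%nat t - theta 1%nat t)).
  nra.
Qed.

Lemma freq_sync i : (i < 3)%nat -> conv (om kappa nu theta i) nb.
Proof.
  intros Hi. apply NNPP. intros Hnc.
  assert (Hosc : exists eps, 0 < eps /\ forall T, exists t, T <= t /\ eps <= Rabs (om kappa nu theta i t - nb)).
  { apply NNPP. intros Hn. apply Hnc. intros eps Heps. apply NNPP. intros Hn2. apply Hn.
    exists eps. split; auto. intros T. apply NNPP. intros Hn3. apply Hn2. exists T.
    intros t Ht. apply Rnot_le_lt. intros Hle. apply Hn3. exists t. auto. }
  destruct Hosc as [eps [Heps Hosc]].
  set (K := 2 * kappa * C + 1).
  assert (HC : 0 <= C) by (unfold C; pose proof (Rabs_pos (nu 0%nat)); pose proof (Rabs_pos (nu 1%nat));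
    pose proof (Rabs_pos (nu 2%nat)); lra).
  assert (HK : 0 < K) by (unfold K; nra).
  set (h := eps / (2 * K)).
  assert (Hh : 0 < h) by (unfold h; apply Rdiv_lt_0_compat; lra).
  set (del := h * (eps/2)^2).
  assert (Hdel : 0 < del) by (unfold del; apply Rmult_lt_0_compat; [lra| apply pow_lt; lra]).
  assert (Hdrop : forall t, 1 <= t -> eps <= Rabs (om kappa nu theta i t - nb) -> V (t + h) <= V t - del).
  { intros t Ht Hbig.
    destruct (mvt_pos V dV t (t+h)) as [c [Hc Heq]]; [lra|lra|exact V_deriv|].
    assert (Hlip := om_lip i t c Hi ltac:(lra) ltac:(lra)).
    assert (Hhk : 2 * kappa * C * Rabs (c - t) <= eps / 2).
    { rewrite Rabs_right by lra.
      assert (0 <= 2*kappa*C) by nra.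
      assert (2*kappa*C*(c-t) <= 2*kappa*C*h) by (apply Rmult_le_compat_l; lra).
      assert (2 * kappa * C * (c - t) <= K * h) by (unfold K; nra).
      assert (K * h = eps / 2) by (unfold h; field; lra). lra. }
    assert (Hbig2 : eps / 2 <= Rabs (om kappa nu theta i c - nb)).
    { replace (om kappa nu theta i t - nb) with ((om kappa nu theta i t - om kappa nu theta i c) + (om kappa nu theta i c - nb)) in Hbig by ring.
      pose proof (Rabs_triang (om kappa nu theta i t - om kappa nu theta i c) (om kappa nu theta i c - nb)).
      rewrite Rabs_minus_sym in Hlip. lra. }
    assert (Hsq : (eps/2)^2 <= (om kappa nu theta i c - nb)^2).
    { pose proof (Rsqr_abs (om kappa nu theta i c - nb)) as Ea. unfold Rsqr in Ea.
      replace ((om kappa nu theta i c - nb)^2) with ((om kappa nu theta i c - nb) * (om kappa nu theta i c - nb)) by ring.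
      rewrite Ea. nra. }
    assert (HdV : dV c <= - (eps/2)^2).
    { unfold dV. pose proof (pow2_ge_0 (om kappa nu theta 0 c - nb)).
      pose proof (pow2_ge_0 (om kappa nu theta 1 c - nb)). pose proof (pow2_ge_0 (om kappa nu theta 2 c - nb)).
      destruct i as [|[|[|i]]]; try lia; lra. }
    replace (t + h - t) with h in Heq by ring.
    unfold del. nra. }
  assert (Hind : forall N : nat, exists t, 1 <= t /\ V t <= V 1 - INR N * del).
  { induction N as [|N IH].
    - exists 1. simpl. split; lra.
    - destruct IH as [t [Ht HV]]. destruct (Hosc t) as [s [Hs Hbig]].
      exists (s + h). split; [lra|].
      pose proof (Hdrop s ltac:(lra) Hbig). pose proof (V_mono t s ltac:(lra) Hs).
      rewrite S_INR. lra. }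
  set (Vb := Rabs (nu 1%nat - nb) * L + Rabs (nu 2%nat - nb) * L + kappa).
  destruct (INR_archimed del (V 1 + Vb)) as [N HN]; [lra|].
  destruct (Hind N) as [t [Ht HV]].
  pose proof (V_lower t Ht). fold Vb in H. lra.
Qed.
End Main.


Lemma conv_ext f g l : (forall t, 1 <= t -> f t = g t) -> conv f l -> conv g l.
Proof.
  intros He Hc eps Heps. destruct (Hc eps Heps) as [T HT]. exists (Rmax T 1). intros t Ht.
  rewrite <- He by (eapply Rle_trans; [apply Rmax_r|exact Ht]).
  apply HT. eapply Rle_trans; [apply Rmax_l|exact Ht].
Qed.

Lemma conv_minus f g l1 l2 : conv f l1 -> conv g l2 -> conv (fun t => f t - g t) (l1 - l2).
Proof.
  intros Hf Hg eps Heps. destruct (Hf (eps/2) ltac:(lra)) as [T1 H1]. destruct (Hg (eps/2) ltac:(lra)) as [T2 H2].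
  exists (Rmax T1 T2). intros t Ht.
  assert (A := H1 t ltac:(eapply Rle_trans; [apply Rmax_l|exact Ht])).
  assert (B := H2 t ltac:(eapply Rle_trans; [apply Rmax_r|exact Ht])).
  replace (f t - g t - (l1 - l2)) with ((f t - l1) + - (g t - l2)) by ring.
  eapply Rle_lt_trans; [apply Rabs_triang|]. rewrite Rabs_Ropp. lra.
Qed.

Lemma conv_const c : conv (fun _ => c) c.
Proof. intros eps Heps. exists 0. intros. rewrite Rminus_diag, Rabs_R0. auto. Qed.

Lemma conv_scale f l c d : conv f l -> conv (fun t => c * f t + d) (c * l + d).
Proof.
  intros Hf eps Heps. destruct (Hf (eps / (Rabs c + 1))) as [T HT].
  { apply Rdiv_lt_0_compat; [lra| pose proof (Rabs_pos c); lra]. }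
  exists T. intros t Ht. specialize (HT t Ht).
  replace (c * f t + d - (c * l + d)) with (c * (f t - l)) by ring.
  rewrite Rabs_mult. pose proof (Rabs_pos c). pose proof (Rabs_pos (f t - l)).
  assert (Rabs (f t - l) * (Rabs c + 1) < eps).
  { apply (Rmult_lt_compat_r (Rabs c + 1)) in HT; [|lra].
    replace (eps / (Rabs c + 1) * (Rabs c + 1)) with eps in HT by (field; lra). exact HT. }
  nra.
Qed.

Lemma conv_is_lim f l : conv f l -> is_lim f p_infty l.
Proof.
  intros Hc. apply is_lim_spec. intros eps. destruct (Hc eps (cond_pos eps)) as [T HT].
  exists T. intros x Hx. apply HT. lra.
Qed.

Lemma main_thm kappa nu theta y : 0 < kappa -> 0 <= y -> 0 < sin y ->
  (forall i j, (i < 3)%nat -> (j < 3)%nat -> nu i - nu j < 2/3*kappa*(sin y*(2*cos y-1))) ->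
  (forall i t, (i < 3)%nat -> 0 < t -> is_derive (theta i) t (om kappa nu theta i t)) ->
  complete_phase_locking theta.
Proof.
  intros Hk Hy Hsy HD Hder.
  destruct (bounded_diffs kappa nu theta y Hk Hy Hsy HD Hder) as [L [HL0 HL]].
  pose proof (freq_sync kappa nu theta Hk Hder L HL 0%nat ltac:(lia)) as F0.
  pose proof (freq_sync kappa nu theta Hk Hder L HL 1%nat ltac:(lia)) as F1.
  pose proof (freq_sync kappa nu theta Hk Hder L HL 2%nat ltac:(lia)) as F2.
  set (nb := (nu 0%nat + nu 1%nat + nu 2%nat) / 3) in *.
  set (a := fun t => theta 1%nat t - theta 0%nat t).
  set (b := fun t => theta 2%nat t - theta 0%nat t).
  assert (S0 : conv (fun t => sin (a t) + sin (b t)) (3/kappa * nb + (- (3/kappa) * nu 0%nat))).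
  { apply (conv_ext (fun t => 3/kappa * om kappa nu theta 0 t + (- (3/kappa) * nu 0%nat))).
    - intros t Ht. unfold a, b, om, kuramoto3_rhs. rewrite sinz. field. lra.
    - apply conv_scale; auto. }
  assert (S0' : conv (fun t => sin (b t) + sin (a t)) (3/kappa * nb + (- (3/kappa) * nu 0%nat))).
  { apply (conv_ext (fun t => sin (a t) + sin (b t))); auto. intros; ring. }
  assert (S1 : conv (fun t => sin (b t - a t) - sin (a t)) (3/kappa * nb + (- (3/kappa) * nu 1%nat))).
  { apply (conv_ext (fun t => 3/kappa * om kappa nu theta 1 t + (- (3/kappa) * nu 1%nat))).
    - intros t Ht. unfold a, b, om, kuramoto3_rhs. rewrite sinz.
      replace (theta 2%nat t - theta 0%nat t - (theta 1%nat t - theta 0%nat t)) with (theta 2%nat t - theta 1%nat t) by ring.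
      replace (theta 0%nat t - theta 1%nat t) with (- (theta 1%nat t - theta 0%nat t)) by ring.
      rewrite sin_neg. field. lra.
    - apply conv_scale; auto. }
  assert (S2 : conv (fun t => sin (a t - b t) - sin (b t)) (3/kappa * nb + (- (3/kappa) * nu 2%nat))).
  { apply (conv_ext (fun t => 3/kappa * om kappa nu theta 2 t + (- (3/kappa) * nu 2%nat))).
    - intros t Ht. unfold a, b, om, kuramoto3_rhs. rewrite sinz.
      replace (theta 1%nat t - theta 0%nat t - (theta 2%nat t - theta 0%nat t)) with (theta 1%nat t - theta 2%nat t) by ring.
      replace (theta 0%nat t - theta 2%nat t) with (- (theta 2%nat t - theta 0%nat t)) by ring.
      rewrite sin_neg. field. lra.
    - apply conv_scale; auto. }
  assert (Hcont : forall i j t, (i < 3)%nat -> (j < 3)%nat -> 0 < t ->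
     continuity_pt (fun t => theta i t - theta j t) t).
  { intros i j t Hi Hj Ht. apply continuity_pt_minus;
      [apply (derive_cont _ t (om kappa nu theta i t))|apply (derive_cont _ t (om kappa nu theta j t))]; apply Hder; auto. }
  assert (Hbd : forall i j t, (i < 3)%nat -> (j < 3)%nat -> 1 <= t -> Rabs (theta i t - theta j t) <= L).
  { intros i j t Hi Hj Ht. pose proof (HL i j t Hi Hj Ht). pose proof (HL j i t Hj Hi Ht). apply Rabs_le; lra. }
  destruct (CL a b _ _ L (fun t Ht => Hcont 1%nat 0%nat t ltac:(lia) ltac:(lia) Ht)
     (fun t Ht => Hbd 1%nat 0%nat t ltac:(lia) ltac:(lia) Ht) S0 S1) as [la Ha].
  destruct (CL b a _ _ L (fun t Ht => Hcont 2%nat 0%nat t ltac:(lia) ltac:(lia) Ht)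
     (fun t Ht => Hbd 2%nat 0%nat t ltac:(lia) ltac:(lia) Ht) S0' S2) as [lb Hb].
  intros i j Hi Hj.
  destruct i as [|[|[|i]]]; destruct j as [|[|[|j]]]; try lia.
  - exists 0. apply conv_is_lim. apply (conv_ext (fun _ => 0)); [intros; ring| apply conv_const].
  - exists (0 - la). apply conv_is_lim. apply (conv_ext (fun t => 0 - a t)); [intros; unfold a; ring|].
    apply conv_minus; [apply conv_const|auto].
  - exists (0 - lb). apply conv_is_lim. apply (conv_ext (fun t => 0 - b t)); [intros; unfold b; ring|].
    apply conv_minus; [apply conv_const|auto].
  - exists la. apply conv_is_lim. apply (conv_ext a); [intros; unfold a; ring|auto].
  - exists 0. apply conv_is_lim. apply (conv_ext (fun _ => 0)); [intros; ring| apply conv_const].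
  - exists (la - lb). apply conv_is_lim. apply (conv_ext (fun t => a t - b t)); [intros; unfold a, b; ring|].
    apply conv_minus; auto.
  - exists lb. apply conv_is_lim. apply (conv_ext b); [intros; unfold b; ring|auto].
  - exists (lb - la). apply conv_is_lim. apply (conv_ext (fun t => b t - a t)); [intros; unfold a, b; ring|].
    apply conv_minus; auto.
  - exists 0. apply conv_is_lim. apply (conv_ext (fun _ => 0)); [intros; ring| apply conv_const].
Qed.

Theorem proposition4p1 (kappa : R) (nu : nat -> R) :
  sqrt (138 + 22 * sqrt 33) / 4 * D3 nu < kappa ->
  forall (Theta0 : nat -> R) (theta : nat -> R -> R),
    kuramoto3_solution kappa nu Theta0 theta ->
    complete_phase_locking theta.
Proof.
  intros Hk Theta0 theta [_ [_ Hsol]].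
  destruct numeric as [y [Hy [Hsy [Hm Hnum]]]].
  assert (HD0 : 0 <= D3 nu).
  { unfold D3. eapply Rle_trans; [|apply Rmax_r]. apply Rabs_pos. }
  assert (Hc0 : 0 <= sqrt (138 + 22 * sqrt 33) / 4) by (pose proof (sqrt_pos (138 + 22 * sqrt 33)); lra).
  assert (Hkpos : 0 < kappa) by (pose proof (Rmult_le_pos _ _ Hc0 HD0); lra).
  pose proof (Hnum (D3 nu) kappa HD0 Hk) as HDk.
  apply (main_thm kappa nu theta y Hkpos Hy Hsy).
  - intros i j Hi Hj.
    assert (Hb : Rabs (nu i - nu j) <= D3 nu).
    { unfold D3.
      assert (E1 := Rmax_l (Rmax (Rabs (nu 0%nat - nu 1%nat)) (Rabs (nu 0%nat - nu 2%nat))) (Rabs (nu 1%nat - nu 2%nat))).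
      assert (E2 := Rmax_r (Rmax (Rabs (nu 0%nat - nu 1%nat)) (Rabs (nu 0%nat - nu 2%nat))) (Rabs (nu 1%nat - nu 2%nat))).
      assert (E3 := Rmax_l (Rabs (nu 0%nat - nu 1%nat)) (Rabs (nu 0%nat - nu 2%nat))).
      assert (E4 := Rmax_r (Rabs (nu 0%nat - nu 1%nat)) (Rabs (nu 0%nat - nu 2%nat))).
      pose proof (Rabs_minus_sym (nu 1%nat) (nu 0%nat)).
      pose proof (Rabs_minus_sym (nu 2%nat) (nu 0%nat)).
      pose proof (Rabs_minus_sym (nu 2%nat) (nu 1%nat)).
      destruct i as [|[|[|i]]]; destruct j as [|[|[|j]]]; try lia;
      try (rewrite Rminus_diag, Rabs_R0; pose proof (Rabs_pos (nu 1%nat - nu 2%nat)); lra); lra. }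
    pose proof (Rle_abs (nu i - nu j)). lra.
  - intros i t Hi Ht. apply Hsol; auto.
Qed.
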